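(* Let $(X,\Sigma,\mu)$ be a measure space with a non-negative (not necessarily probability) measure $\mu$, let $K$ be a compact space, and let $f,g\colon X\to K$ be simple measurable functions. If $f\neq g$ $\mu$-almost everywhere, then there exists $L\in\Sigma$ such that $\mu(L)\ge\mu(X)/4$ and $f[L]\cap g[L]=\emptyset$.
   Context: A simple measurable function is a measurable function taking only finitely many values. *)

(* Defs.v *)
From HB Require Import structures.
From mathcomp Require Import all_boot all_order all_algebra.
From mathcomp Require Import all_classical all_reals all_analysis.
Set Implicit Arguments. Unset Strict Implicit. Unset Printing Implicit Defensive.
Import Order.TTheory GRing.Theory Num.Theory.
Local Open Scope classical_set_scope.

Definition simple_measurable (d : measure_display) (T : measurableType d)
  (K : Type) (f : T -> K) : Prop :=
  finite_set (range f) /\ (forall y : K, measurable (f @^-1` [set y])).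

(* Main.v *)
Require Import Defs.
From mathcomp Require Import all_boot all_order all_algebra.
From mathcomp Require Import all_classical all_reals all_analysis.
From mathcomp Require Import measurable_realfun.
Import Order.TTheory GRing.Theory Num.Theory.

Lemma count_ij n (i j : 'I_n.+2) : i != j ->
  #|[set c : {ffun 'I_n.+2 -> bool} | c i && ~~ c j]| = (2 ^ n)%N.
Proof.
move=> ij.
pose F := fun m : 'I_n.+2 => if m == i then pred1 true else if m == j then pred1 false else predT.
have -> : [set c : {ffun 'I_n.+2 -> bool} | c i && ~~ c j] = [set c in family F].
  apply/setP => c; rewrite !inE; apply/andP/familyP.
  - case=> ci cj m; rewrite /F; case: eqP => [->|mi]; first by rewrite inE ci.
    case: eqP => [->|//]; by rewrite inE; case: (c j) cj.
  - move=> H; split; first by have := H i; rewrite /F eqxx inE => /eqP.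
    have := H j; rewrite /F eq_sym (negbTE ij) eqxx inE => /eqP ->; done.
rewrite cardsE card_family foldrE big_image /=.
rewrite (bigD1 i) //= (bigD1 j) 1?eq_sym //= /F eqxx eq_sym (negbTE ij) eqxx.
rewrite !card1 !mul1n.
rewrite (eq_bigr (fun _ => 2)); last first.
  by move=> m /andP[mj mi]; rewrite (negbTE mi) (negbTE mj) card_bool.
rewrite prod_nat_const; congr (_ ^ _).
have := cardC [pred x : 'I_n.+2 | (x == i) || (x == j)].
rewrite card_ord card2 ij /= => H.
have E : #|[pred x : 'I_n.+2 | (x != i) && (x != j)]| = #|[predC [pred x : 'I_n.+2 | (x == i) || (x == j)]]|.
  by apply: eq_card => x; rewrite !inE negb_or.
rewrite E; apply/eqP; rewrite -(eqn_add2l 2) H.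
by [].
Qed.

Local Open Scope classical_set_scope.
Local Open Scope ring_scope.

Lemma seq_of_fin {T : Type} {K : choiceType} (f g : T -> K) :
  finite_set (range f) -> finite_set (range g) ->
  exists s : seq K, forall x, f x \in s /\ g x \in s.
Proof.
move=> ff fg.
have fin : finite_set (range f `|` range g) by rewrite finite_setU.
exists (finmap.enum_fset (fset_set (range f `|` range g))) => x.
by split; rewrite (in_fset_set fin) inE /=; [left|right]; exists x.
Qed.

Lemma premeas d (T : measurableType d) (K : choiceType) (h : T -> K) (s : seq K)
  (hs : forall x, h x \in s) (hm : forall y, measurable (h @^-1` [set y])) (P : set K) :
  measurable (h @^-1` P).
Proof.
have -> : h @^-1` P = \big[setU/set0]_(y <- s | `[< P y >]) h @^-1` [set y].
  rewrite -bigcup_seq_cond; apply/seteqP; split => x /=.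
  - move=> Px; exists (h x) => //=; rewrite hs /=; exact/asboolP.
  - by case=> y /= /andP[_ /asboolP Py] ->.
by apply: bigsetU_measurable => y _; apply: hm.
Qed.

Theorem proposition7p7 (d : measure_display) (T : measurableType d)
  (R : realType) (mu : {measure set T -> \bar R})
  (K : topologicalType) (hK : compact [set: K])
  (f g : T -> K) (hf : simple_measurable f) (hg : simple_measurable g)
  (hfg : {ae mu, forall x, f x <> g x}) :
  exists L : set T, measurable L /\
    (mu [set: T] * (4%:R^-1)%:E <= mu L)%E /\
    f @` L `&` g @` L = set0.
Proof.
case: hf => ff mf; case: hg => fg mg.
have [s hs] := seq_of_fin f g ff fg.
set n := size s.
pose idx (y : K) : 'I_n.+2 := inord (index y s).
have idx_inj y y' : y \in s -> y' \in s -> idx y = idx y' -> y = y'.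
  move=> ys y's /(congr1 (@nat_of_ord _)); rewrite /idx !inordK; last 2 first.
  - by rewrite -index_mem in y's; apply: (ltn_trans y's); apply: (ltn_trans (ltnSn n)).
  - by rewrite -index_mem in ys; apply: (ltn_trans ys); apply: (ltn_trans (ltnSn n)).
  by move=> e; rewrite -(nth_index y ys) e nth_index.
pose L (c : {ffun 'I_n.+2 -> bool}) := f @^-1` [set y | c (idx y)] `&` g @^-1` [set y | ~~ c (idx y)].
have mL c : measurable (L c).
  apply: measurableI; [apply: (@premeas _ _ _ _ s) | apply: (@premeas _ _ _ _ s)] => //; by move=> x; case: (hs x).
have disj c : f @` L c `&` g @` L c = set0.
  apply/seteqP; split => // y [[x [/= cx _] <-] [x' [/= _ cx'] ex]].
  by move: cx'; rewrite ex cx.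
pose c0 : {ffun 'I_n.+2 -> bool} := [ffun => false].
pose cs := [arg max_(c > c0) mu (L c)]%O.
have cmax : forall c, (mu (L c) <= mu (L cs))%E.
  by rewrite /cs; case: arg_maxP => // c0' _ H c; apply: H.
exists (L cs); split => //; split => //.
pose Q : R := (2 ^ n)%:R.
have mi c : measurable_fun [set: T] (EFin \o (\1_(L c) : T -> R)).
  by apply/measurable_EFinP; apply: measurable_indic.
have H1 : (\sum_(c : {ffun 'I_n.+2 -> bool}) mu (L c) =
    \int[mu]_x (\sum_(c : {ffun 'I_n.+2 -> bool}) (\1_(L c) x)%:E))%E.
  rewrite ge0_integral_sum //.
  by apply: eq_bigr => c _; rewrite integral_indic // setIT.
have pt x : f x <> g x -> (\sum_(c : {ffun 'I_n.+2 -> bool}) (\1_(L c) x)%:E = Q%:E :> \bar R)%E.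
  move=> fgx.
  have ij : idx (f x) != idx (g x).
    by apply/eqP => /idx_inj; case: (hs x) => h1 h2 /(_ h1 h2).
  rewrite sumEFin /Q -(@count_ij _ _ _ ij); congr (_%:E).
  rewrite -sumr_const [RHS]big_mkcond /=.
  apply: eq_bigr => c _; rewrite inE indicE.
  case: ifPn => H.
    by rewrite mem_set //; move/andP: H => [h1 h2]; split.
  rewrite memNset //; case => /= h1 h2; move/negP: H; apply; exact/andP.
have H2 : ((Q%:E * mu setT) <= \int[mu]_x (\sum_(c : {ffun 'I_n.+2 -> bool}) (\1_(L c) x)%:E))%E.
  rewrite -integral_cst //; apply: ae_ge0_le_integral => //.
  - by move=> x _; rewrite lee_fin /Q ler0n.
  - by move=> x _; apply: sume_ge0 => c _; rewrite lee_fin.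
  - by apply: emeasurable_sum => c; apply: mi.
  - by apply: filterS hfg => x fgx _; rewrite pt.
have H3 : (\sum_(c : {ffun 'I_n.+2 -> bool}) mu (L c) <= \sum_(c : {ffun 'I_n.+2 -> bool}) mu (L cs))%E.
  by apply: lee_sum => c _; apply: cmax.
rewrite sumr_const card_ffun card_bool card_ord in H3.
have E := mule_natl (mu (L cs)) (2 ^ n.+2).
have {}H3 : (\sum_(c : {ffun 'I_n.+2 -> bool}) mu (L c) <= ((2 ^ n.+2)%:R)%:E * mu (L cs))%E.
  by rewrite E; exact: H3.
rewrite -H1 in H2.
have H4 := le_trans H2 H3.
have e2 : ((2 ^ n.+2)%:R : R) = 4 * Q by rewrite /Q -natrM !expnS mulnA.
have Qpos : (0 < Q)%R by rewrite /Q ltr0n expn_gt0.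
have Pfin : ((4 * Q)%:E : \bar R) \is a fin_num by rewrite fin_numE.
have Ppos : (0 < ((4 * Q)%:E : \bar R))%E by rewrite lte_fin mulr_gt0.
rewrite -(lee_pmul2l Pfin Ppos) -e2.
have -> : (((2 ^ n.+2)%:R)%:E * (mu [set: T] * (4^-1)%:E) = Q%:E * mu [set: T])%E.
  rewrite [X in (_ * X)%E]muleC muleA -EFinM e2; congr (_ * _)%E; congr (_%:E).
  by rewrite mulrAC mulfV ?mul1r.
exact: H4.
Qed.
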